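(* Let $G=(V,E)$ be a multigraph with vertices $u_1,\dots,u_k$ ($k\ge2$) and edges $e_1,\dots,e_\ell$ with $\ell>2k$, and consider the fair division instance $\mathcal{I}(G)$ described in the context. If $G$ has no independent set of size larger than $t$, then every EF1 allocation of $\mathcal{I}(G)$ has social welfare at most $t+2$.
   Context: Instance $\mathcal{I}(G)$: agents are $a_i^{(j)}$ ($1\le i\le\ell$, $1\le j\le k$) and $s^{(j)}$ ($1\le j\le k$), so $n=k\ell+k$. Items are $b_r^{(j)}$ ($1\le r\le k$, $1\le j\le k$), with $B^{(j)}=\{b_1^{(j)},\dots,b_k^{(j)}\}$, and $c_1,\dots,c_{k^2}$ forming $C$, so $m=2k^2$. Let $\tau=2/k^2$. Agent $s^{(j)}$ values each item of $B^{(j)}$ at $1/k$ and every other item at $0$. If edge $e_i$ has endpoints $u_{i_1},u_{i_2}$, agent $a_i^{(j)}$ values each of $b_{i_1}^{(j)},b_{i_2}^{(j)}$ at $\tau/2$, each item of $C$ at $(1-\tau)/k^2$, and every other item at $0$. Valuations are additive (and normalized). An allocation is a partition of the items among agents; it is EF1 if for all agents $x\ne y$ with $A_y\ne\emptyset$ there is $g\in A_y$ with $v_x(A_x)\ge v_x(A_y\setminus\{g\})$; social welfare is $\sum_x v_x(A_x)$. An independent set is a set of vertices no two of which are joined by an edge. *)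

(* Defs.v *)
From mathcomp Require Import all_boot all_order all_algebra.
Set Implicit Arguments. Unset Strict Implicit. Unset Printing Implicit Defensive.
Import Order.TTheory GRing.Theory Num.Theory.
Local Open Scope ring_scope.

(* Multigraph G on vertices 'I_k (u_1..u_k) with edges 'I_l (e_1..e_l);
   edge i has endpoints e1 i and e2 i (no loops: e1 i != e2 i). *)

(* Agents: inl (i, j) = a_i^(j), inr j = s^(j). *)
Definition agent (k l : nat) := ('I_l * 'I_k + 'I_k)%type.
(* Items: inl (r, j) = b_r^(j), inr c = c_c  (c ranges over k^2 items). *)
Definition item (k : nat) := ('I_k * 'I_k + 'I_(k * k))%type.

Definition tau (R : realFieldType) (k : nat) : R := 2 / (k%:R ^+ 2).

Definition value (R : realFieldType) (k l : nat) (e1 e2 : 'I_l -> 'I_k)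
    (x : agent k l) (g : item k) : R :=
  match x, g with
  | inr j, inl (r, j') => if j' == j then 1 / k%:R else 0
  | inr _, inr _ => 0
  | inl (i, j), inl (r, j') =>
      if (j' == j) && ((r == e1 i) || (r == e2 i)) then tau R k / 2 else 0
  | inl _, inr _ => (1 - tau R k) / (k%:R ^+ 2)
  end.

Definition vbundle (R : realFieldType) (k l : nat) (e1 e2 : 'I_l -> 'I_k)
    (x : agent k l) (S : {set item k}) : R :=
  \sum_(g in S) value R e1 e2 x g.

(* An allocation (partition of all items among agents) is a map item -> agent. *)
Definition bundle (k l : nat) (A : item k -> agent k l) (y : agent k l)
  : {set item k} := [set g | A g == y].

Definition EF1 (R : realFieldType) (k l : nat) (e1 e2 : 'I_l -> 'I_k)
    (A : item k -> agent k l) : Prop :=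
  forall x y : agent k l, x != y -> bundle A y != set0 ->
    exists2 g, g \in bundle A y &
      vbundle R e1 e2 x (bundle A y :\ g) <= vbundle R e1 e2 x (bundle A x).

Definition social_welfare (R : realFieldType) (k l : nat) (e1 e2 : 'I_l -> 'I_k)
    (A : item k -> agent k l) : R :=
  \sum_(x : agent k l) vbundle R e1 e2 x (bundle A x).

Definition independent (k l : nat) (e1 e2 : 'I_l -> 'I_k) (S : {set 'I_k}) : bool :=
  [forall i : 'I_l, ~~ ((e1 i \in S) && (e2 i \in S))].

(* Main.v *)
Require Import Defs.
From mathcomp Require Import all_boot all_order all_algebra.
From mathcomp Require Import ring lra.
Import Order.TTheory GRing.Theory Num.Theory.
Local Open Scope ring_scope.

Lemma vb_ge_item (R : realFieldType) (k l : nat) (e1 e2 : 'I_l -> 'I_k)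
  (x : agent k l) (S : {set item k}) (g : item k) :
  (forall g', 0 <= value R e1 e2 x g') -> g \in S ->
  value R e1 e2 x g <= vbundle R e1 e2 x S.
Proof.
move=> h0 gS; rewrite /vbundle (bigD1 g) //= lerDl.
by apply: sumr_ge0 => i _; apply: h0.
Qed.

Arguments vb_ge_item {R k l e1 e2 x S g}.

Theorem mainTheorem13 (R : realFieldType) (k l : nat)
    (e1 e2 : 'I_l -> 'I_k) (t : nat) :
  (2 <= k)%N -> (2 * k < l)%N ->
  (forall i : 'I_l, e1 i != e2 i) ->
  (forall S : {set 'I_k}, independent e1 e2 S -> (#|S| <= t)%N) ->
  forall A : item k -> agent k l,
    EF1 R e1 e2 A -> social_welfare R e1 e2 A <= t%:R + 2.
Proof.
move=> hk hl hne hind A hEF.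
set K := (k%:R : R).
have K2 : 2 <= K by rewrite /K (ler_nat R 2 k).
have Kpos : 0 < K by lra.
set q := 1 / K ^+ 2.
have qK : q * K ^+ 2 = 1 by rewrite /q div1r mulVf // expf_neq0 // gt_eqF.
have qpos : 0 < q by rewrite /q divr_gt0 // exprn_gt0.
have K24 : 4 <= K ^+ 2 by rewrite expr2; nra.
have q4 : 4 * q <= 1.
  have h : 0 <= q * (K ^+ 2 - 4) by apply: mulr_ge0; [exact: ltW | rewrite subr_ge0].
  rewrite mulrBr qK in h; lra.
have tauq : tau R k = 2 * q by rewrite /tau /q /K mulrA mulr1.
have hq2 : 2 * q / 2 = q by field.
have hdK : forall a, a / K ^+ 2 = a * q by move=> a; rewrite /q mulrA mulr1.
have iK : 0 < 1 / K by rewrite divr_gt0.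
have hv0 : forall x g, 0 <= value R e1 e2 x g.
  move=> [[i j]|j] [[r j']|c] /=; rewrite ?tauq -/K ?hq2 ?hdK; try case: ifP => _;
  rewrite ?lexx //; try lra.
  by apply: mulr_ge0; lra.
have [[pi pj] hp] : exists p : 'I_l * 'I_k, forall g, A g != inl p.
  have k0 : (0 < k)%N by apply: leq_trans hk.
  have l0 : (0 < l)%N by apply: leq_trans hl.
  pose p0 : 'I_l * 'I_k := (Ordinal l0, Ordinal k0).
  pose f := fun g => match A g with inl p => p | inr _ => p0 end.
  pose S := [set p | [exists g, A g == inl p]].
  have sS : S \subset f @: setT.
    apply/subsetP => p; rewrite inE => /existsP [g /eqP hg].
    by apply/imsetP; exists g => //; rewrite /f hg.
  have cS : (#|S| < #|{: 'I_l * 'I_k}|)%N.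
    apply: (leq_ltn_trans (subset_leq_card sS)).
    apply: (leq_ltn_trans (leq_imset_card _ _)).
    rewrite cardsT card_sum !card_prod !card_ord.
    rewrite addnn -mul2n mulnA mulnC.
    by rewrite [X in (X < _)%N]mulnC ltn_pmul2r.
  have : ~~ (setT \subset S).
    apply/negP => h; move: (subset_leq_card h); rewrite cardsT leqNgt cS.
    by [].
  case/subsetPn => p _; rewrite inE => /existsPn hp.
  by exists p.
have C1 : forall y c1 c2, A (inr c1) = y -> A (inr c2) = y -> c1 = c2.
  move=> y c1 c2 h1 h2; apply/eqP/negPn/negP => hc.
  have hxy : inl (pi, pj) != y by rewrite -h1 eq_sym hp.
  have hne0 : bundle A y != set0.
    by apply/set0Pn; exists (inr c1); rewrite inE h1.
  have [g hg hle] := hEF _ _ hxy hne0.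
  have e0 : bundle A (inl (pi, pj)) = set0.
    by apply/setP => g'; rewrite !inE (negbTE (hp g')).
  move: hle; rewrite e0 /vbundle big_set0.
  pose c := if g == inr c1 then c2 else c1.
  have cin : inr c \in bundle A y :\ g.
    rewrite /c; case: (eqVneq g (inr c1)) => [->|ne]; rewrite !inE.
      by rewrite h2 eqxx andbT; apply: contra hc => /eqP [->].
    by rewrite eq_sym ne h1 eqxx.
  move/(le_trans (vb_ge_item (hv0 _) cin)) => /=.
  rewrite tauq -/K hdK => h.
  have : 0 < (1 - 2 * q) * q by apply: mulr_gt0; lra.
  lra.
have hS : forall j, (#|[set r | A (inl (r, j)) == inr j]| <= t)%N.
  move=> j; apply: hind; apply/forallP => i; apply/negP; rewrite !inE.
  case/andP => /eqP h1 /eqP h2.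
  have hxy : inl (i, j) != inr j :> agent k l by [].
  have hne0 : bundle A (inr j) != set0.
    by apply/set0Pn; exists (inl (e1 i, j)); rewrite inE h1.
  have [g hg hle] := hEF _ _ hxy hne0.
  pose b := if g == inl (e1 i, j) then inl (e2 i, j) else inl (e1 i, j) : item k.
  have bin : b \in bundle A (inr j) :\ g.
    rewrite /b; case: (eqVneq g (inl (e1 i, j))) => [->|ne]; rewrite !inE.
      by rewrite h2 eqxx andbT; apply: contra (hne i) => /eqP [->].
    by rewrite eq_sym ne h1 eqxx.
  have vb : value R e1 e2 (inl (i, j)) b = q.
    rewrite /b; case: ifP => _ /=; rewrite eqxx ?eqxx ?orbT /= tauq hq2 //.
  have lo := le_trans (vb_ge_item (hv0 _) bin) hle; rewrite vb in lo.
  have hi : vbundle R e1 e2 (inl (i, j)) (bundle A (inl (i, j))) <= (1 - 2 * q) * q.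
    have hB : forall r j', A (inl (r, j')) = inl (i, j) ->
        value R e1 e2 (inl (i, j)) (inl (r, j')) = 0.
      move=> r j' hA /=; case: ifP => // /andP [/eqP ejj /orP [/eqP er|/eqP er]].
        by move: hA; rewrite ejj er h1.
      by move: hA; rewrite ejj er h2.
    have hr : (1 - tau R k) / K ^+ 2 = (1 - 2 * q) * q by rewrite tauq hdK.
    case: (boolP [exists c, A (inr c) == inl (i, j)]) => [/existsP [c /eqP hc]|/existsPn hn].
      rewrite /vbundle (bigD1 (inr c)) /=; last by rewrite inE hc.
      rewrite big1 ?addr0 -?/K ?hr //.
      move=> [[r j']|c'] /andP [hg' ne]; rewrite inE in hg'; move/eqP: hg' => hg'.
        exact: hB.
      by move: ne; rewrite (C1 _ _ _ hg' hc) eqxx.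
    rewrite /vbundle big1; first by apply: mulr_ge0; lra.
    move=> [[r j']|c'] hg'; rewrite inE in hg'; move/eqP: hg' => hg'.
      exact: hB.
    by move: (hn c'); rewrite hg' eqxx.
  have : 0 < q * q by apply: mulr_gt0.
  lra.
have sw : social_welfare R e1 e2 A = \sum_g value R e1 e2 (A g) g.
  rewrite (partition_big A xpredT) //= /social_welfare.
  apply: eq_bigr => x _; rewrite /vbundle.
  apply: eq_big => [g|g]; first by rewrite inE.
  by rewrite inE => /eqP ->.
pose W := fun g : item k => match g with
  | inl (r, j) => if A g == inr j then 1 / K else 0
  | inr _ => 0 end.
rewrite sw (@le_trans _ _ (\sum_g (W g + q))) //.
  apply: ler_sum => -[[r j]|c] _ /=; case: (A _) => [[i j']|j'] /=.
  - case: ifP => _; rewrite ?tauq -/K ?hq2; lra.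
    case: (eqVneq j j') => [<-|ne]; first by rewrite !eqxx -/K; lra.
    by case: ifP => _; lra.
  - rewrite tauq -/K hdK; nra.
  - lra.
rewrite big_split /= sumr_const card_sum !card_prod !card_ord big_sumType /= [X in _ + X + _]big1 // addr0.
have hq : q *+ (k * k + k * k) = 2.
  rewrite -mulr_natr natrD natrM -/K -expr2 -mulr2n mulrnAr qK; by [].
rewrite hq.
pose F := fun (r j : 'I_k) => if A (inl (r, j)) == inr j then 1 / K else 0.
rewrite (eq_bigr (fun i => F i.1 i.2)); last by case.
rewrite -(pair_bigA _ F) /= exchange_big /=.
have : \sum_(j < k) \sum_(r < k) (if A (inl (r, j)) == inr j then 1 / K else 0) <= \sum_(j < k) (t%:R * (1 / K)).
  apply: ler_sum => j _.
  have -> : \sum_(r < k) (if A (inl (r, j)) == inr j then 1 / K else 0) = \sum_(r in [set r | A (inl (r, j)) == inr j]) 1 / K.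
    by rewrite [RHS]big_mkcond; apply: eq_bigr => r _; rewrite inE.
  rewrite sumr_const -[X in X <= _]mulr_natl ler_pM2r // ler_nat; exact: hS.
rewrite sumr_const card_ord.
have -> : t%:R * (1 / K) *+ k = t%:R.
  by rewrite -mulr_natr -/K; field; rewrite gt_eqF.
rewrite /F; lra.
Qed.
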